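(* Let $G$ be a linearly ordered abelian group, $F$ a field of characteristic $0$, $n\leq 3$, and let $\Gamma$ be an almost non-degenerate elementary $G$-grading on $M_n(F)$ whose neutral component is commutative. Then $\Gamma$ is equivalent to the canonical $\mathbb{Z}$-grading on $M_n(F)$.
   Context: A linearly ordered group is a group with a translation-invariant total order. The elementary grading on $M_n(F)$ induced by $(g_1,\dots,g_n)$ is $R_g=\mathrm{span}\{e_{pq}: g_q-g_p=g\}$; the canonical $\mathbb{Z}$-grading is the one induced by $(0,1,\dots,n-1)$. Two gradings are equivalent if there are an algebra isomorphism $\varphi$ and a bijection $\alpha$ between their supports with $\varphi(A_g)=B_{\alpha(g)}$ for all $g$ in the support. A graded monomial identity is trivial if it lies in the $T_G$-ideal generated by the variables whose degree is outside the support of the grading, and non-trivial otherwise; a grading is almost non-degenerate if it satisfies no non-trivial multilinear graded monomial identity. *)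

(* Defs.v *)
From HB Require Import structures.
From mathcomp Require Import all_boot all_order all_algebra.
Set Implicit Arguments. Unset Strict Implicit. Unset Printing Implicit Defensive.
Import GRing.Theory.
Local Open Scope ring_scope.

Definition lin_ordered_group (G : zmodType) (le : rel G) : Prop :=
  [/\ reflexive le, antisymmetric le, transitive le, total le &
      forall x y z : G, le x y -> le (x + z) (y + z)].

Section Elementary.
Variables (F : fieldType) (G : zmodType) (n : nat).

(* Homogeneous component R_h of the elementary grading induced by
   (g_1,...,g_n): R_h = span{ e_pq : g q - g p = h }, i.e. the matrices
   supported on the entries (p,q) with g q - g p = h. *)
Definition in_comp (g : 'I_n -> G) (h : G) (A : 'M[F]_n) : Prop :=
  forall p q : 'I_n, A p q != 0 -> g q - g p = h.

Definition gsupp (g : 'I_n -> G) : pred G :=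
  fun h => [exists p : 'I_n, exists q : 'I_n, g q - g p == h].

(* The multilinear graded monomial x_1^(h_1) ... x_m^(h_m) (m >= 1, distinct
   variables, degrees hs) is a graded identity of the grading. *)
Definition is_monomial_identity (g : 'I_n -> G) (hs : seq G) : Prop :=
  forall As : seq 'M[F]_n, size As = size hs ->
    (forall i, (i < size hs)%N -> in_comp g (nth 0 hs i) (nth 0 As i)) ->
    foldr mulmx 1%:M As = 0.

(* The monomial lies in the T_G-ideal generated by the variables of degree
   outside the support: some nonempty consecutive factor has degree outside
   the support. *)
Definition trivial_monomial (g : 'I_n -> G) (hs : seq G) : Prop :=
  exists i j : nat, [/\ (i < j)%N, (j <= size hs)%N &
    ~~ gsupp g (\sum_(h <- take (j - i) (drop i hs)) h)].

Definition almost_nondegenerate (g : 'I_n -> G) : Prop :=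
  forall hs : seq G, (0 < size hs)%N -> is_monomial_identity g hs ->
    trivial_monomial g hs.

Definition neutral_commutative (g : 'I_n -> G) : Prop :=
  forall A B : 'M[F]_n, in_comp g 0 A -> in_comp g 0 B -> A *m B = B *m A.

End Elementary.

Definition canon_deg (n : nat) : 'I_n -> int := fun i => (nat_of_ord i)%:Z.

Arguments canon_deg n i : clear implicits.

Definition alg_iso (F : fieldType) (n : nat) (phi : 'M[F]_n -> 'M[F]_n) : Prop :=
  [/\ bijective phi,
      forall (c : F) (A B : 'M[F]_n), phi (c *: A + B) = c *: phi A + phi B,
      forall A B : 'M[F]_n, phi (A *m B) = phi A *m phi B &
      phi 1%:M = 1%:M].

Definition graded_equiv (F : fieldType) (G H : zmodType) (n : nat)
    (g : 'I_n -> G) (k : 'I_n -> H) : Prop :=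
  exists (phi : 'M[F]_n -> 'M[F]_n) (alpha : G -> H),
    [/\ alg_iso phi,
        {in gsupp g, forall h, alpha h \in gsupp k},
        {in gsupp g &, injective alpha},
        (forall t, t \in gsupp k -> exists2 h, h \in gsupp g & alpha h = t) &
        {in gsupp g, forall h,
           (forall A, in_comp g h A -> in_comp k (alpha h) (phi A)) /\
           (forall B, in_comp k (alpha h) B ->
              exists2 A, in_comp g h A & phi A = B)}].

(* Main.v *)
Require Import Defs.
From HB Require Import structures.
From mathcomp Require Import all_boot all_order all_algebra all_fingroup.
Set Implicit Arguments. Unset Strict Implicit. Unset Printing Implicit Defensive.
Import GRing.Theory.
Local Open Scope ring_scope.

Lemma gsuppP (G : zmodType) n (g : 'I_n -> G) h :
  reflect (exists p q, g q - g p = h) (gsupp g h).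
Proof.
apply: (iffP idP).
  by move=> /existsP [p /existsP [q /eqP E]]; exists p, q.
by move=> [p [q E]]; apply/existsP; exists p; apply/existsP; exists q; rewrite E.
Qed.

Lemma equiv_of (F : fieldType) (G : zmodType) n (g : 'I_n -> G) (s : 'S_n) :
  (forall p q p' q', g (s q) - g (s p) = g (s q') - g (s p') <->
     (q%:Z - p%:Z = q'%:Z - p'%:Z)) ->
  graded_equiv F g (canon_deg n).
Proof.
move=> C.
pose phi (A : 'M[F]_n) := \matrix_(i, j) A (s i) (s j).
pose psi (A : 'M[F]_n) := \matrix_(i, j) A ((s^-1)%g i) ((s^-1)%g j).
pose alpha (h : G) : int :=
  if [pick pq : 'I_n * 'I_n | g (s pq.2) - g (s pq.1) == h] is Some pq
  then pq.2%:Z - pq.1%:Z else 0.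
have alphaE p q : alpha (g (s q) - g (s p)) = q%:Z - p%:Z.
  rewrite /alpha; case: pickP => [[p' q'] /= /eqP E|].
    by apply/C.
  by move/(_ (p, q)); rewrite eqxx.
have suppE h : gsupp g h -> exists p q, h = g (s q) - g (s p).
  move/gsuppP=> [p [q <-]]; exists ((s^-1)%g p), ((s^-1)%g q).
  by rewrite !permKV.
have canE (i : 'I_n) : canon_deg n i = i%:Z by [].
exists phi, alpha; split.
- split.
  + exists psi => A; apply/matrixP => i j; rewrite !mxE ?permK ?permKV //.
  + by move=> c A B; apply/matrixP => i j; rewrite !mxE.
  + move=> A B; apply/matrixP => i j; rewrite !mxE.
    rewrite (reindex_inj (@perm_inj _ s)) /=.
    by apply: eq_bigr => k _; rewrite !mxE.
  + by apply/matrixP => i j; rewrite !mxE (inj_eq (@perm_inj _ s)).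
- move=> h /suppE [p [q ->]]; rewrite alphaE.
  by apply/gsuppP; exists p, q.
- move=> h1 h2 /suppE [p1 [q1 ->]] /suppE [p2 [q2 ->]].
  by rewrite !alphaE => /C.
- move=> t /gsuppP [p [q <-]]; exists (g (s q) - g (s p)).
    by apply/gsuppP; exists (s p), (s q).
  by rewrite alphaE.
- move=> h /suppE [p [q ->]]; rewrite alphaE; split.
    move=> A HA i j; rewrite mxE => /HA E.
    by rewrite !canE; apply/C.
  move=> B HB; exists (psi B).
    move=> i j; rewrite mxE => /HB; rewrite !canE => E.
    by rewrite -(permKV s i) -(permKV s j); apply/C.
  by apply/matrixP => i j; rewrite !mxE !permK.
Qed.


Section Ord.
Variables (G : zmodType) (le : rel G).
Hypothesis H : lin_ordered_group le.

Definition posb (a : G) := le 0 a && (a != 0).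

Lemma nn_add a b : le 0 a -> le 0 b -> le 0 (a + b).
Proof.
case: H => _ _ tr _ tl => ha hb.
by apply: tr hb _; have := tl _ _ b ha; rewrite add0r.
Qed.

Lemma pos_add a b : posb a -> le 0 b -> posb (a + b).
Proof.
case: H => _ an tr _ tl => /andP [ha na] hb.
rewrite /posb nn_add //=; apply/negP => /eqP E.
have := tl _ _ b ha; rewrite add0r E => hb0.
have b0 : b = 0 by apply: an; rewrite hb hb0.
by rewrite b0 addr0 in E; rewrite E eqxx in na.
Qed.

Lemma nn_muln a k : le 0 a -> le 0 (a *+ k).
Proof.
case: H => rf _ _ _ _ ha.
by elim: k => [|k IH]; rewrite ?mulr0n ?rf // mulrS nn_add.
Qed.

Lemma pos_muln a k : posb a -> posb (a *+ k.+1).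
Proof. by move=> ha; rewrite mulrS pos_add // nn_muln //; case/andP: ha. Qed.

Lemma pos_ne0 a : posb a -> a != 0.
Proof. by case/andP. Qed.

Lemma posb_or (d : G) : d != 0 -> posb d \/ posb (- d).
Proof.
case: H => _ _ _ tot tl => nd.
case/orP: (tot 0 d) => h; [left|right]; first by rewrite /posb h.
rewrite /posb oppr_eq0 nd andbT.
by have := tl _ _ (- d) h; rewrite subrr add0r.
Qed.

Lemma pos_intmul (e : G) m : posb e -> e *~ m = 0 -> m = 0.
Proof.
move=> pe; case: m => [[|k]|k] //.
  by move=> E; move: (pos_ne0 (pos_muln k pe)); rewrite -[e *+ _]/(e *~ Posz k.+1) E eqxx.
rewrite NegzE mulrNz => /eqP; rewrite oppr_eq0 => /eqP E.
by move: (pos_ne0 (pos_muln k pe)); rewrite -[e *+ _]/(e *~ Posz k.+1) E eqxx.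
Qed.

Lemma torsion (d : G) m : d != 0 -> d *~ m = 0 -> m = 0.
Proof.
move=> /posb_or [pd|pd]; first exact: pos_intmul.
by move=> E; apply: (pos_intmul pd); rewrite mulNrz E oppr0.
Qed.

Definition sgncond (e1 e2 : int) :=
  (((0 <= e1) && (0 <= e2)) || ((e1 <= 0) && (e2 <= 0))) && ((e1 != 0) || (e2 != 0)).

Lemma pos_comb (x y : G) (a b : nat) : posb x -> posb y -> (0 < a + b)%N ->
  posb (x *+ a + y *+ b).
Proof.
move=> px py; case: a => [|a] /=.
  by case: b => // b _; rewrite mulr0n add0r pos_muln.
move=> _; rewrite pos_add ?pos_muln // nn_muln //; by case/andP: py.
Qed.

Lemma sgn_ne0 (x y : G) e1 e2 : posb x -> posb y -> sgncond e1 e2 ->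
  x *~ e1 + y *~ e2 != 0.
Proof.
move=> px py.
have P a b : (0 < a + b)%N -> x *~ Posz a + y *~ Posz b != 0.
  by move=> h; apply: pos_ne0; apply: pos_comb.
have N a b : (0 < a + b)%N -> x *~ - Posz a + y *~ - Posz b != 0.
  by move=> h; rewrite !mulrNz -opprD oppr_eq0; apply: P.
case: e1 => [[|a]|a]; case: e2 => [[|b]|b]; rewrite /sgncond //=.
all: try (by move=> _; apply: P).
all: rewrite ?NegzE; try (by move=> _; rewrite -[Posz 0]oppr0; apply: N).
all: try (by move=> _; apply: N).
- by move=> _; exact: (N 0%N b.+1 isT).
- by move=> _; exact: (N a.+1 0%N isT).
Qed.

End Ord.


Lemma g_inj (F : fieldType) (G : zmodType) n (g : 'I_n -> G) :
  neutral_commutative F g -> injective g.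
Proof.
move=> nc p q E; case: (eqVneq p q) => // npq; exfalso.
have hc (a b : 'I_n) : g a = g b -> in_comp g 0 (delta_mx a b : 'M[F]_n).
  move=> Eab i j; rewrite mxE.
  have [->|ne1] := eqVneq i a; have [->|ne2] := eqVneq j b; rewrite ?eqxx //=.
  by rewrite Eab subrr.
have := nc _ _ (hc p q E) (hc q p (esym E)); rewrite !mul_delta_mx.
move/matrixP/(_ p p); rewrite !mxE !eqxx andbb /=.
by move: npq; case: eqP => //= _ _ /eqP; rewrite oner_eq0.
Qed.

Lemma prog (G : zmodType) n (g : 'I_n -> G) (s : 'S_n) a d :
  (forall i, g (s i) = a + d *~ (i : nat)%:Z) ->
  forall i j, g (s j) - g (s i) = d *~ ((j : nat)%:Z - (i : nat)%:Z).
Proof. by move=> E i j; rewrite !E mulrzBr [a + _]addrC addrKA. Qed.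

Lemma C_tors (G : zmodType) n (g : 'I_n -> G) (s : 'S_n) a d :
  (forall i, g (s i) = a + d *~ (i : nat)%:Z) ->
  (forall m, d *~ m = 0 -> m = 0) ->
  forall p q p' q', g (s q) - g (s p) = g (s q') - g (s p') <->
     (q%:Z - p%:Z = q'%:Z - p'%:Z).
Proof.
move=> E tf p q p' q'; rewrite !(prog E); split => [h|->//].
by apply/eqP; rewrite -subr_eq0; apply/eqP; apply: tf; rewrite mulrzBr h subrr.
Qed.

Lemma C_small (G : zmodType) n (g : 'I_n -> G) (s : 'S_n) : (n <= 1)%N ->
  forall p q p' q', g (s q) - g (s p) = g (s q') - g (s p') <->
     (q%:Z - p%:Z = q'%:Z - p'%:Z).
Proof.
move=> hn.
have E (i j : 'I_n) : i = j.
  apply/val_inj; move: (ltn_ord i) (ltn_ord j) hn; case: n {g s} i j => [|[|n]] [[|?] ?] [[|?] ?] //.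
by move=> p q p' q'; rewrite (E q p) (E q' p') (E p' p).
Qed.

Notation o0 := (@Ordinal 3 0 isT).
Notation o1 := (@Ordinal 3 1 isT).
Notation o2 := (@Ordinal 3 2 isT).

Lemma ord3 (i : 'I_3) : i = o0 \/ i = o1 \/ i = o2.
Proof.
by case: i => [[|[|[|//]]] Hi]; [left|right;left|right;right]; apply: val_inj.
Qed.

Lemma mk3 (i j k : 'I_3) : i != j -> j != k -> i != k ->
  exists s : 'S_3, [/\ s o0 = i, s o1 = j & s o2 = k].
Proof.
move=> hij hjk hik.
pose f t := if t == o0 then i else if t == o1 then j else k.
have finj : injective f.
  move=> t1 t2; case: (ord3 t1) => [->|[->|->]]; case: (ord3 t2) => [->|[->|->]] //=;
  rewrite /f /= => E; move: hij hjk hik; rewrite E ?eqxx //.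
by exists (perm finj); rewrite !permE.
Qed.


Section S.
Variables (G : zmodType) (le : rel G).
Hypothesis H : lin_ordered_group le.

Lemma lt_pos (u v : G) : le u v -> u != v -> posb le (v - u).
Proof.
case: H => _ _ _ _ tl h nuv; rewrite /posb subr_eq0 eq_sym nuv andbT.
by have := tl _ _ (- u) h; rewrite subrr.
Qed.

Lemma sort3 (g : 'I_3 -> G) : injective g ->
  exists s : 'S_3, posb le (g (s o1) - g (s o0)) /\ posb le (g (s o2) - g (s o1)).
Proof.
move=> ginj.
have L (i j : 'I_3) : le (g i) (g j) -> i != j -> posb le (g j - g i).
  by move=> h nij; apply: lt_pos => //; rewrite (inj_eq ginj).
case: (H) => _ anti trans tot _.
have go (i j k : 'I_3) : i != j -> j != k -> i != k -> le (g i) (g j) -> le (g j) (g k) ->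
   exists s : 'S_3, posb le (g (s o1) - g (s o0)) /\ posb le (g (s o2) - g (s o1)).
  move=> hij hjk hik h1 h2; have [s [E0 E1 E2]] := mk3 hij hjk hik.
  by exists s; rewrite E0 E1 E2; split; apply: L.
case/orP: (tot (g o0) (g o1)) => h01; case/orP: (tot (g o1) (g o2)) => h12;
case/orP: (tot (g o0) (g o2)) => h02.
- exact: (go o0 o1 o2).
- exfalso; have : g o0 = g o2 by apply: anti; rewrite h02 (trans (g o1)).
  by move/ginj/(congr1 val).
- exact: (go o0 o2 o1).
- exact: (go o2 o0 o1).
- exact: (go o1 o0 o2).
- exact: (go o1 o2 o0).
- exfalso; have : g o0 = g o2 by apply: anti; rewrite h02 (trans (g o1)).
  by move/ginj/(congr1 val).
- exact: (go o2 o1 o0).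
Qed.

End S.


Section S.
Variables (G : zmodType) (le : rel G).
Hypothesis H : lin_ordered_group le.

Lemma n3 (F : fieldType) (g : 'I_3 -> G) (s : 'S_3) :
  posb le (g (s o1) - g (s o0)) -> posb le (g (s o2) - g (s o1)) ->
  almost_nondegenerate F g ->
  g (s o1) - g (s o0) = g (s o2) - g (s o1).
Proof.
move=> px py an.
set a := g (s o0); set x := g (s o1) - a; set y := g (s o2) - g (s o1).
case: (eqVneq x y) => // hxy; exfalso.
pose u (i : 'I_3) : int := if (i : nat) == 0%N then 0 else 1.
pose v (i : 'I_3) : int := if (i : nat) == 2%N then 1 else 0.
have rep i : g (s i) = a + (x *~ u i + y *~ v i).
  case: (ord3 i) => [->|[->|->]]; rewrite /u /v /= ?mulr0z ?mulr1z ?addr0 //.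
    by rewrite /x subrKC.
  by rewrite /x /y addrA subrKC subrKC.
have diff i j : g (s j) - g (s i) = x *~ (u j - u i) + y *~ (v j - v i).
  by rewrite !rep [a + _]addrC addrKA !mulrzBr opprD addrACA.
have contra e1 e2 f1 f2 : x *~ e1 + y *~ e2 = x *~ f1 + y *~ f2 ->
    sgncond (e1 - f1) (e2 - f2) -> False.
  move=> E c; have := sgn_ne0 H px py c.
  by rewrite !mulrzBr addrACA -opprD E subrr eqxx.
have yE : y = x *~ 0 + y *~ 1 by rewrite mulr0z mulr1z add0r.
have xE : x = x *~ 1 + y *~ 0 by rewrite mulr0z mulr1z addr0.
have compY p q : g (s q) - g (s p) = y -> q = o2.
  rewrite diff {2}yE.
  case: (ord3 p) => [->|[->|->]]; case: (ord3 q) => [->|[->|->]] //= E; try (by exfalso; apply: (contra _ _ _ _ E)).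
  move: E; rewrite /u /v /= -yE subr0 subrr mulr0z mulr1z addr0 => E1.
  by rewrite E1 eqxx in hxy.
have compX p q : g (s q) - g (s p) = x -> p = o0.
  rewrite diff {2}xE.
  case: (ord3 p) => [->|[->|->]]; case: (ord3 q) => [->|[->|->]] //= E; try (by exfalso; apply: (contra _ _ _ _ E)).
  move: E; rewrite /u /v /= -xE subrr subr0 mulr0z mulr1z add0r => E1.
  by rewrite E1 eqxx in hxy.
have mi : is_monomial_identity F g [:: y; x].
  move=> [|A1 [|A2 [|? ?]]] //= _ hc.
  have h1 := hc 0%N isT; have h2 := hc 1%N isT; rewrite /= in h1 h2.
  rewrite mulmx1; apply/matrixP => i j; rewrite !mxE; apply: big1 => k _.
  case: (eqVneq (A1 i k) 0) => [->|nz1]; first by rewrite mul0r.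
  case: (eqVneq (A2 k j) 0) => [->|nz2]; first by rewrite mulr0.
  exfalso; have E1 := h1 _ _ nz1; have E2 := h2 _ _ nz2.
  rewrite -(permKV s k) -(permKV s i) in E1.
  rewrite -(permKV s k) -(permKV s j) in E2.
  by have := compY _ _ E1; rewrite (compX _ _ E2).
have [i [j [lij lj2 ns]]] := an [:: y; x] isT mi.
have inS p q : gsupp g (g (s q) - g (s p)) by apply/gsuppP; exists (s p), (s q).
move: ns; case: i lij => [|[|i]]; case: j lj2 => [|[|[|j]]] //= _ _;
  rewrite ?big_cons ?big_nil ?addr0.
- by rewrite inS.
- by rewrite -[y + x]/(g (s o2) - g (s o1) + (g (s o1) - a)) addrA subrK inS.
- by rewrite inS.
Qed.
End S.


Theorem mainTheorem9 (G : zmodType) (le : rel G) (F : fieldType) (n : nat)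
    (g : 'I_n -> G) :
  lin_ordered_group le ->
  [pchar F] =i pred0 ->
  (n <= 3)%N ->
  almost_nondegenerate F g ->
  neutral_commutative F g ->
  graded_equiv F g (canon_deg n).
Proof.
move=> H _ hn an nc; have ginj := g_inj nc.
case: n g hn an nc ginj => [|[|[|[|n]]]] g hn an nc ginj //.
- by apply: (@equiv_of F _ _ g 1%g); apply: C_small.
- by apply: (@equiv_of F _ _ g 1%g); apply: C_small.
- apply: (@equiv_of F _ _ g 1%g).
  pose q0 : 'I_2 := @Ordinal 2 0 isT; pose q1 : 'I_2 := @Ordinal 2 1 isT.
  apply: (C_tors (a := g q0) (d := g q1 - g q0)).
    move=> i; rewrite perm1; case: i => [[|[|//]] Hi].
      by rewrite mulr0z addr0; congr g; apply: val_inj.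
    by rewrite mulr1z subrKC; congr g; apply: val_inj.
  move=> m; apply: (torsion H); rewrite subr_eq0; apply/negP => /eqP /ginj.
  by move/(congr1 val).
- have [s [p1 p2]] := sort3 H ginj.
  have E := n3 H p1 p2 an.
  apply: (@equiv_of F _ _ g s).
  apply: (C_tors (a := g (s o0)) (d := g (s o1) - g (s o0))); last first.
    by move=> m; apply: (torsion H); apply: pos_ne0 p1.
  move=> i; case: (ord3 i) => [->|[->|->]] /=.
  + by rewrite mulr0z addr0.
  + by rewrite mulr1z subrKC.
  + rewrite -[(g (s o1) - g (s o0)) *~ _]/((g (s o1) - g (s o0)) *+ 2) mulr2n {2}E addrA subrKC subrKC.
    done.
Qed.
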